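(* Let $H,K\in C^\infty(\mathbb R^3\times\mathbb R^3)$ satisfy $\{H,K\}=0$ for the Poisson structure $\mathfrak E$. Then: (a) on $(\widetilde{\mathbb T},\Omega)$ the functions $H\circ\mathbf J_e$, $K\circ\mathbf J_e$, $J^0$, $\Gamma^0$ pairwise Poisson commute; moreover $K_1\circ\mathbf J_e=J^0\Gamma^0$ and $K_2\circ\mathbf J_e=(\Gamma^0)^2$, where $K_1(\vec J,\vec\Gamma)=\vec\Gamma\cdot\vec J$, $K_2(\vec J,\vec\Gamma)=\vec\Gamma^2$; (b) on $(\mathbb R^3\times\dot{\mathbb R}^3,\Omega_\mu)$ the functions $H\circ\mathbf J_{e,\mu}$, $K\circ\mathbf J_{e,\mu}$ and $K_2\circ\mathbf J_{e,\mu}=\vec y^2$ pairwise Poisson commute; (c) on $(S_\nu,\Omega|_{S_\nu})$ the functions $H\circ\mathbf J_{e,\nu}$, $K\circ\mathbf J_{e,\nu}$ and $J^0|_{S_\nu}$ pairwise Poisson commute.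
   Context: Pauli matrices $\sigma_0=I_2$, $\sigma_1=\begin{pmatrix}0&1\\1&0\end{pmatrix}$, $\sigma_2=\begin{pmatrix}0&i\\-i&0\end{pmatrix}$, $\sigma_3=\mathrm{diag}(1,-1)$, $\vec\sigma=(\sigma_1,\sigma_2,\sigma_3)$. $\widetilde{\mathbb T}=\{(\vartheta,\zeta)\in\mathbb C^2\times\mathbb C^2:\zeta\ne0\}$ with $\Omega=d\zeta^+\wedge d\vartheta-d\vartheta^+\wedge d\zeta$. $\mathbf J_e=(\vec J,\vec\Gamma)$, $\vec J=\frac i2(\zeta^+\vec\sigma\vartheta-\vartheta^+\vec\sigma\zeta)$, $\vec\Gamma=-\zeta^+\vec\sigma\zeta$; $J^0=\frac i2(\zeta^+\vartheta-\vartheta^+\zeta)$, $\Gamma^0=-\zeta^+\zeta$. $\mathfrak E$: $\{J^k,J^l\}=-\epsilon_{klm}J^m$, $\{J^k,\Gamma^l\}=-\epsilon_{klm}\Gamma^m$, $\{\Gamma^k,\Gamma^l\}=0$ (Lie–Poisson structure of $\mathbf e(3)^*$ in coordinates $J_k=-J^k,\Gamma_k=-\Gamma^k$). For $\mu\in\mathbb R$: $\Phi(P,\zeta)=((P-\frac{i\mu}{\zeta^+\zeta}\sigma_0)\zeta,\zeta)$ on $H_0(2)\times(\mathbb C^2\setminus\{0\})$; $(\vec p,\vec y)=(-\frac12\mathrm{Tr}(\vec\sigma P),\mathrm{Tr}(\vec\sigma\zeta\zeta^+))$ identifies the quotient by $\zeta\mapsto e^{it}\zeta$ with $\mathbb R^3\times\dot{\mathbb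 R}^3$; $\Omega_\mu$ is the $2$-form on $\mathbb R^3\times\dot{\mathbb R}^3$ whose pullback to $H_0(2)\times(\mathbb C^2\setminus\{0\})$ is $\Phi^*\Omega$; $\mathbf J_{e,\mu}(\vec p,\vec y)=(\vec y\times\vec p+\mu\vec y/\|\vec y\|,-\vec y)$. For $\nu<0$: $S_\nu=\{(\vartheta,\zeta)\in\widetilde{\mathbb T}:\zeta^+\zeta=-\nu,\ \zeta^+\vartheta+\vartheta^+\zeta=0\}$ (a symplectic submanifold) and $\mathbf J_{e,\nu}=\mathbf J_e|_{S_\nu}$. *)

(* Defs.v *)
From HB Require Import structures.
From mathcomp Require Import all_boot all_order all_algebra.
From mathcomp Require Import all_classical all_reals all_analysis.
From mathcomp Require Import complex.
Set Implicit Arguments. Unset Strict Implicit. Unset Printing Implicit Defensive.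
Import Order.TTheory GRing.Theory Num.Theory.
Import numFieldNormedType.Exports.
Local Open Scope ring_scope.
Local Open Scope classical_set_scope.

Definition crd (R : realType) (n : nat) (x : 'rV[R]_n.+1) (k : nat) : R :=
  x ord0 (inord k).

Fixpoint Ck (R : realType) (n : nat) (k : nat) (f : 'rV[R]_n -> R) : Prop :=
  match k with
  | 0 => continuous f
  | k'.+1 => (forall x : 'rV[R]_n, differentiable f x) /\ (forall v : 'rV[R]_n, Ck k' (fun x : 'rV[R]_n => 'd f x v))
  end.
Definition smooth (R : realType) (n : nat) (f : 'rV[R]_n -> R) : Prop :=
  forall k, Ck k f.

(* Poisson commutation at a point x of a (sub)manifold of R^n whose tangent
   space at x is T, for a 2-form whose value at x is om : the Hamiltonian
   vector fields X_f, X_g (i.e. the tangent vectors with om(X_f, v) = df_x(v)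
   for all tangent v) satisfy {f,g}(x) = om(X_f, X_g) = 0.
   (The sign convention for X_f is irrelevant for vanishing.) *)
Definition poisson_commute_at (R : realType) (n : nat) (T : set 'rV[R]_n)
  (om : 'rV[R]_n -> 'rV[R]_n -> R) (f g : 'rV[R]_n -> R) (x : 'rV[R]_n) : Prop :=
  forall Xf Xg : 'rV[R]_n, T Xf -> T Xg ->
    (forall v, T v -> om Xf v = 'd f x v) ->
    (forall v, T v -> om Xg v = 'd g x v) ->
    om Xf Xg = 0.

(* Levi-Civita symbol on indices 0,1,2 : eps_klm = (k-l)(l-m)(m-k)/2 *)
Definition eps (R : realType) (k l m : nat) : R :=
  ((k%:R - l%:R) * (l%:R - m%:R) * (m%:R - k%:R)) / 2.

(* w = (J^1,J^2,J^3,Gamma^1,Gamma^2,Gamma^3) = (w_0,...,w_5).           *)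
(*  {J^k,J^l} = -eps_klm J^m, {J^k,Gamma^l} = -eps_klm Gamma^m,         *)
(*  {Gamma^k,Gamma^l} = 0 (hence {Gamma^k,J^l} = -eps_klm Gamma^m).     *)

Definition piE (R : realType) (w : 'rV[R]_6) (a b : 'I_6) : R :=
  if (a < 3)%N && (b < 3)%N then - \sum_(m < 3) eps R a b m * crd w m
  else if (a < 3)%N && (3 <= b)%N then - \sum_(m < 3) eps R a (b - 3) m * crd w (3 + m)
  else if (3 <= a)%N && (b < 3)%N then - \sum_(m < 3) eps R (a - 3) b m * crd w (3 + m)
  else 0.

Definition pd (R : realType) (n : nat) (F : 'rV[R]_n -> R) (z : 'rV[R]_n) (a : 'I_n) : R :=
  'd F z (delta_mx ord0 a).

Definition LP_bracket (R : realType) (F G : 'rV[R]_6 -> R) (w : 'rV[R]_6) : R :=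
  \sum_(a < 6) \sum_(b < 6) piE w a b * pd F w a * pd G w b.

Definition K1 (R : realType) (w : 'rV[R]_6) : R := \sum_(k < 3) crd w (3 + k) * crd w k.
Definition K2 (R : realType) (w : 'rV[R]_6) : R := \sum_(k < 3) crd w (3 + k) ^+ 2.

Definition iC (R : realType) : R[i] := Complex 0 1.

(* sigma_1, sigma_2 = [[0,i],[-i,0]], sigma_3 ; index k = 0,1,2 <-> sigma_{k+1} *)
Definition sigma1 (R : realType) : 'M[R[i]]_2 :=
  \matrix_(i < 2, j < 2) (if i != j then 1 else 0).
Definition sigma2 (R : realType) : 'M[R[i]]_2 :=
  \matrix_(i < 2, j < 2)
    (if ((i : nat) == 0%N) && ((j : nat) == 1%N) then iC R
     else if ((i : nat) == 1%N) && ((j : nat) == 0%N) then - iC R else 0).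
Definition sigma3 (R : realType) : 'M[R[i]]_2 :=
  \matrix_(i < 2, j < 2)
    (if i == j then (if (i : nat) == 0%N then 1 else -1) else 0).
Definition sigma (R : realType) (k : nat) : 'M[R[i]]_2 :=
  if k == 0%N then sigma1 R else if k == 1%N then sigma2 R else sigma3 R.

Definition hc (R : realType) (u : 'cV[R[i]]_2) : 'rV[R[i]]_2 := (map_mx conjc u)^T.
Definition hform (R : realType) (u : 'cV[R[i]]_2) (M : 'M[R[i]]_2) (v : 'cV[R[i]]_2) : R[i] :=
  (hc u *m M *m v) ord0 ord0.

(* C^2 x C^2 as the real vector space R^8:                              *)

Definition theta (R : realType) (x : 'rV[R]_8) : 'cV[R[i]]_2 :=
  \col_(j < 2) Complex (crd x (2 * j)) (crd x (2 * j + 1)).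
Definition zeta (R : realType) (x : 'rV[R]_8) : 'cV[R[i]]_2 :=
  \col_(j < 2) Complex (crd x (4 + 2 * j)) (crd x (5 + 2 * j)).
(* inverse map (theta, zeta) |-> x *)
Definition toR8 (R : realType) (th ze : 'cV[R[i]]_2) : 'rV[R]_8 :=
  \row_(a < 8)
    (let w := if (a < 4)%N then th else ze in
     let c := w (inord ((a %% 4) %/ 2)) ord0 in
     if odd a then complex.Im c else complex.Re c).

Definition Ttilde (R : realType) : set 'rV[R]_8 := [set x | zeta x != 0].

(* Omega = d zeta^+ /\ d theta - d theta^+ /\ d zeta (constant 2-form),
   (alpha /\ beta)(u,v) = alpha(u) beta(v) - alpha(v) beta(u).
   Its value is real; we take the real part. *)
Definition Omega (R : realType) (u v : 'rV[R]_8) : R :=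
  complex.Re
    ((hform (zeta u) 1%:M (theta v) - hform (zeta v) 1%:M (theta u))
     - (hform (theta u) 1%:M (zeta v) - hform (theta v) 1%:M (zeta u))).

Definition Jup (R : realType) (k : nat) (x : 'rV[R]_8) : R :=
  complex.Re (Complex 0 (2^-1) *
    (hform (zeta x) (sigma R k) (theta x) - hform (theta x) (sigma R k) (zeta x))).
Definition Gup (R : realType) (k : nat) (x : 'rV[R]_8) : R :=
  complex.Re (- hform (zeta x) (sigma R k) (zeta x)).
Definition J0 (R : realType) (x : 'rV[R]_8) : R :=
  complex.Re (Complex 0 (2^-1) *
    (hform (zeta x) 1%:M (theta x) - hform (theta x) 1%:M (zeta x))).
Definition G0 (R : realType) (x : 'rV[R]_8) : R :=
  complex.Re (- hform (zeta x) 1%:M (zeta x)).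
Definition Je (R : realType) (x : 'rV[R]_8) : 'rV[R]_6 :=
  \row_(a < 6) (if (a < 3)%N then Jup a x else Gup (a - 3) x).

Definition pvec (R : realType) (x : 'rV[R]_6) (k : nat) : R := crd x k.
Definition yvec (R : realType) (x : 'rV[R]_6) (k : nat) : R := crd x (3 + k).
Definition ysq (R : realType) (x : 'rV[R]_6) : R := \sum_(k < 3) yvec x k ^+ 2.
Definition ynorm (R : realType) (x : 'rV[R]_6) : R := Num.sqrt (ysq x).
Definition Rdot3 (R : realType) : set 'rV[R]_6 := [set x | ysq x != 0].

Definition Jemu (R : realType) (mu : R) (x : 'rV[R]_6) : 'rV[R]_6 :=
  \row_(a < 6)
    (if (a < 3)%N then
       \sum_(l < 3) \sum_(m < 3) eps R a l m * yvec x l * pvec x m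
       + mu * yvec x a / ynorm x
     else - yvec x (a - 3)).

(* H_0(2) x C^2 parametrised (linear isomorphism) by R^7:
   P(q) = [[q0, q1 + i q2], [q1 - i q2, -q0]] (general traceless Hermitian),
   zeta(q) = (q3 + i q4, q5 + i q6). *)
Definition Pof (R : realType) (q : 'rV[R]_7) : 'M[R[i]]_2 :=
  \matrix_(i < 2, j < 2)
    (if i == j then (if (i : nat) == 0%N then Complex (crd q 0) 0 else Complex (- crd q 0) 0)
     else if (i : nat) == 0%N then Complex (crd q 1) (crd q 2)
     else Complex (crd q 1) (- crd q 2)).
Definition zetaof (R : realType) (q : 'rV[R]_7) : 'cV[R[i]]_2 :=
  \col_(j < 2) Complex (crd q (3 + 2 * j)) (crd q (4 + 2 * j)).

Definition Phi (R : realType) (mu : R) (q : 'rV[R]_7) : 'rV[R]_8 :=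
  let ze := zetaof q in
  let n2 := complex.Re (hform ze 1%:M ze) in
  toR8 ((Pof q - (Complex 0 (mu / n2)) *: 1%:M) *m ze) ze.

(* (p, y) = (-1/2 Tr(sigma P), Tr(sigma zeta zeta^+)) ; these traces are real *)
Definition proj (R : realType) (q : 'rV[R]_7) : 'rV[R]_6 :=
  \row_(a < 6)
    (if (a < 3)%N then complex.Re (- Complex (2^-1) 0 * \tr (sigma R a *m Pof q))
     else complex.Re (\tr (sigma R (a - 3) *m (zetaof q *m hc (zetaof q))))).

(* om is (a representative of) Omega_mu : its pullback by the quotient map
   equals Phi^* Omega on H_0(2) x (C^2 \ 0). *)
Definition is_Omega_mu (R : realType) (mu : R) (om : 'rV[R]_6 -> 'rV[R]_6 -> 'rV[R]_6 -> R) : Prop :=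
  forall q : 'rV[R]_7, zetaof q != 0 ->
    forall u v : 'rV[R]_7,
      om (proj q) ('d (@proj R) q u) ('d (@proj R) q v)
      = Omega ('d (Phi mu) q u) ('d (Phi mu) q v).

Definition S_nu (R : realType) (nu : R) : set 'rV[R]_8 :=
  [set x | zeta x != 0 /\ hform (zeta x) 1%:M (zeta x) = Complex (- nu) 0
           /\ hform (zeta x) 1%:M (theta x) + hform (theta x) 1%:M (zeta x) = 0].

(* defining functions of S_nu (both are real-valued) *)
Definition cS1 (R : realType) (x : 'rV[R]_8) : R :=
  complex.Re (hform (zeta x) 1%:M (zeta x)).
Definition cS2 (R : realType) (x : 'rV[R]_8) : R :=
  complex.Re (hform (zeta x) 1%:M (theta x) + hform (theta x) 1%:M (zeta x)).
(* tangent space of the regular level set S_nu at x *)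
Definition TS (R : realType) (x : 'rV[R]_8) : set 'rV[R]_8 :=
  [set v | 'd (@cS1 R) x v = 0 /\ 'd (@cS2 R) x v = 0].

(* Main.v *)
Require Import Defs.
From HB Require Import structures.
From mathcomp Require Import all_boot all_order all_algebra.
From mathcomp Require Import all_classical all_reals all_analysis.
From mathcomp Require Import complex.
From mathcomp Require Import ring lra.
Import Order.TTheory GRing.Theory Num.Theory.
Import numFieldNormedType.Exports.
Local Open Scope ring_scope.
Local Open Scope classical_set_scope.
Set Implicit Arguments. Unset Strict Implicit. Unset Printing Implicit Defensive.

Ltac fld := field; try by [].
Ltac nnorm := rewrite ?(addn0, muln0, muln1, add0n);
  try change (3+2)%N with 5%N; try change (4+2)%N with 6%N; try change (5+2)%N with 7%N;
  try change (2+1)%N with 3%N; try change (3+1)%N with 4%N.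
Ltac nsub := try change (3-3)%N with 0%N; try change (4-3)%N with 1%N; try change (5-3)%N with 2%N.
Section Infra.
Variable R : realType.

Definition vrow (n : nat) (g : nat -> R) : 'rV[R]_n.+1 := \row_(i < n.+1) g i.

Lemma crd_vrow n g k : (k <= n)%N -> crd (vrow n g) k = g k.
Proof. by move=> hk; rewrite /crd /vrow mxE inordK. Qed.

Lemma vrow_sum n g : vrow n g = \sum_(a < n.+1) g a *: 'e_a.
Proof.
apply/rowP => j; rewrite summxE (bigD1 j) //= big1 ?addr0.
  by rewrite !mxE !eqxx mulr1.
by move=> i /negbTE ij; rewrite !mxE eq_sym ij mulr0.
Qed.

Lemma is_diff_crd n k (x : 'rV[R]_n.+1) :
  is_diff x (fun y : 'rV[R]_n.+1 => crd y k) (fun v => crd v k).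
Proof.
have lin : linear (fun y : 'rV[R]_n.+1 => crd y k).
  by move=> a u v; rewrite /crd !mxE.
pose f : {linear 'rV[R]_n.+1 -> R^o} :=
  HB.pack (fun y : 'rV[R]_n.+1 => crd y k) (GRing.isLinear.Build _ _ _ _ _ lin).
have fc : continuous f by move=> y; exact: coord_continuous.
apply: DiffDef; first exact: (linear_differentiable _ fc).
exact: (diff_lin _ fc).
Qed.

Lemma is_diff_bigsum n (I : Type) (r : seq I) (g dg : I -> 'rV[R]_n.+1 -> R)
    (x : 'rV[R]_n.+1) :
  (forall i, is_diff x (g i) (dg i)) ->
  is_diff x (fun y => \sum_(i <- r) g i y) (fun v => \sum_(i <- r) dg i v).
Proof.
move=> hg; elim: r => [|a r IH].
  have -> : (fun y : 'rV[R]_n.+1 => \sum_(i <- [::]) g i y) = cst 0.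
    by apply/funext => y; rewrite big_nil.
  have h0 := is_diff_cst (0 : R^o) x.
  apply: is_diff_eq h0 _.
  by apply/funext => v; rewrite big_nil.
have -> : (fun y => \sum_(i <- a :: r) g i y) =
   g a + (fun y => \sum_(i <- r) g i y).
  by apply/funext => y; rewrite big_cons.
apply: is_diff_eq (is_diffD (hg a) IH) _.
by apply/funext => v; rewrite big_cons.
Qed.

Lemma is_diff_bigsumV n m (I : Type) (r : seq I) (g dg : I -> 'rV[R]_n.+1 -> 'rV[R]_m)
    (x : 'rV[R]_n.+1) :
  (forall i, is_diff x (g i) (dg i)) ->
  is_diff x (fun y => \sum_(i <- r) g i y) (fun v => \sum_(i <- r) dg i v).
Proof.
move=> hg; elim: r => [|a r IH].
  have -> : (fun y : 'rV[R]_n.+1 => \sum_(i <- [::]) g i y) = cst 0.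
    by apply/funext => y; rewrite big_nil.
  have h0 := is_diff_cst (0 : 'rV[R]_m) x.
  apply: is_diff_eq h0 _.
  by apply/funext => v; rewrite big_nil.
have -> : (fun y => \sum_(i <- a :: r) g i y) =
   g a + (fun y => \sum_(i <- r) g i y).
  by apply/funext => y; rewrite big_cons.
apply: is_diff_eq (is_diffD (hg a) IH) _.
by apply/funext => v; rewrite big_cons.
Qed.

Lemma is_diff_scalc n m (k dk : 'rV[R]_n.+1 -> R) (c : 'rV[R]_m) x :
  is_diff x k dk -> is_diff x (fun z => k z *: c) (fun v => dk v *: c).
Proof.
move=> hk; apply: DiffDef; first exact: differentiableZl.
by rewrite diffZl // diff_val.
Qed.

Definition qsum n (Q : seq (R * nat * nat)) (x : 'rV[R]_n.+1) : R :=
  \sum_(m <- Q) m.1.1 * (crd x m.1.2 * crd x m.2).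
Definition lsum n (L : seq (R * nat)) (x : 'rV[R]_n.+1) : R :=
  \sum_(m <- L) m.1 * crd x m.2.
Definition pl n Q L (x : 'rV[R]_n.+1) := qsum Q x + lsum L x.
Definition dpl n Q L (x v : 'rV[R]_n.+1) :=
  \sum_(m <- Q) m.1.1 * (crd x m.1.2 * crd v m.2 + crd v m.1.2 * crd x m.2)
  + lsum L v.

Lemma is_diff_pl n Q L (x : 'rV[R]_n.+1) : is_diff x (pl Q L) (dpl Q L x).
Proof.
have hq : is_diff x (qsum Q)
   (fun v => \sum_(m <- Q) m.1.1 * (crd x m.1.2 * crd v m.2 + crd v m.1.2 * crd x m.2)).
  apply: (@is_diff_bigsum n _ Q (fun m y => m.1.1 * (crd y m.1.2 * crd y m.2))
     (fun m v => m.1.1 * (crd x m.1.2 * crd v m.2 + crd v m.1.2 * crd x m.2))).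
  move=> [[c i] j] /=.
  have h1 := is_diffM (is_diff_crd i x) (is_diff_crd j x).
  have h2 := is_diffZ c h1.
  apply: is_diff_eq h2 _.
  apply/funext => v /=.
  change (c * (crd x i * crd v j + crd x j * crd v i) = c * (crd x i * crd v j + crd v i * crd x j)).
  by rewrite [crd x j * _]mulrC.
have hl : is_diff x (lsum L) (lsum L).
  apply: (@is_diff_bigsum n _ L (fun m y => m.1 * crd y m.2)
     (fun m v => m.1 * crd v m.2)).
  move=> [c i] /=.
  exact: (is_diffZ c (is_diff_crd i x)).
exact: is_diffD.
Qed.

Lemma d_pl n Q L (x v : 'rV[R]_n.+1) : 'd (pl Q L) x v = dpl Q L x v.
Proof. by have h := is_diff_pl Q L x; rewrite diff_val. Qed.

Lemma chain_vrow n m (F : 'rV[R]_n.+1 -> 'rV[R]_m.+1)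
    (f : nat -> 'rV[R]_n.+1 -> R) (H : 'rV[R]_m.+1 -> R) x :
  (forall y, F y = vrow m (fun k => f k y)) ->
  (forall k, differentiable (f k) x) ->
  differentiable H (F x) ->
  differentiable F x /\
  (forall v, 'd F x v = vrow m (fun k => 'd (f k) x v)) /\
  differentiable (H \o F) x /\
  forall v, 'd (H \o F) x v = \sum_(a < m.+1) 'd (f a) x v * pd H (F x) a.
Proof.
move=> hF hf hH.
have eF : F = fun y => \sum_(a < m.+1) f a y *: 'e_a.
  by apply/funext => y; rewrite hF vrow_sum.
have dF : is_diff x F (fun v => \sum_(a < m.+1) 'd (f a) x v *: 'e_a).
  rewrite eF; refine (@is_diff_bigsumV n m.+1 'I_m.+1 (index_enum _) (fun a y => f a y *: 'e_a)
      (fun a v => 'd (f a) x v *: 'e_a) x _) => a.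
  by apply: is_diff_scalc; apply: differentiableP.
have dFv : forall v, 'd F x v = vrow m (fun k => 'd (f k) x v).
  by move=> v; rewrite diff_val vrow_sum.
split; first exact: ex_diff.
split => //.
have dHF : differentiable (H \o F) x by apply: differentiable_comp.
split => // v.
rewrite diff_comp //= (diff_val (f:=F)) linear_sum; apply: eq_bigr => a _.
by rewrite linearZ /pd.
Qed.

Lemma ham_gen n (T : set 'rV[R]_n) (om : 'rV[R]_n -> 'rV[R]_n -> R)
   (df dg : 'rV[R]_n -> R) (I : Type) (r : seq I) (be : I -> R)
   (dpsi : I -> 'rV[R]_n -> R) (Y : I -> 'rV[R]_n) (Xf Xg : 'rV[R]_n) :
  (forall u v, T u -> T v -> om u v = - om v u) ->
  (forall b, T (Y b)) -> (forall b v, T v -> om (Y b) v = dpsi b v) ->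
  (forall v, T v -> dg v = \sum_(b <- r) be b * dpsi b v) ->
  T Xf -> T Xg -> (forall v, T v -> om Xf v = df v) ->
  (forall v, T v -> om Xg v = dg v) ->
  om Xf Xg = \sum_(b <- r) be b * df (Y b).
Proof.
move=> anti TY hY hg TXf TXg hXf hXg.
rewrite anti // hXg // hg // -sumrN; apply: eq_bigr => b _.
by rewrite -hY // anti // hXf // mulrN opprK.
Qed.

End Infra.

Ltac plsimp := rewrite /pl /dpl /qsum /lsum ?big_cons ?big_nil /=.
Section PartA.
Variable R : realType.
Definition LJe (a : nat) : seq (R * nat * nat) :=
  match a with
  | 0%N => [:: (1%:R, 0%N, 7%N); ((-1%:R), 1%N, 6%N); (1%:R, 2%N, 5%N); ((-1%:R), 3%N, 4%N)]
  | 1%N => [:: (1%:R, 0%N, 6%N); (1%:R, 1%N, 7%N); ((-1%:R), 2%N, 4%N); ((-1%:R), 3%N, 5%N)]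
  | 2%N => [:: (1%:R, 0%N, 5%N); ((-1%:R), 1%N, 4%N); ((-1%:R), 2%N, 7%N); (1%:R, 3%N, 6%N)]
  | 3%N => [:: ((-2%:R), 4%N, 6%N); ((-2%:R), 5%N, 7%N)]
  | 4%N => [:: (2%:R, 4%N, 7%N); ((-2%:R), 5%N, 6%N)]
  | 5%N => [:: ((-1%:R), 4%N, 4%N); ((-1%:R), 5%N, 5%N); (1%:R, 6%N, 6%N); (1%:R, 7%N, 7%N)]
  | _ => [::] end.
Definition LJ0 : seq (R * nat * nat) := [:: (1%:R, 0%N, 5%N); ((-1%:R), 1%N, 4%N); (1%:R, 2%N, 7%N); ((-1%:R), 3%N, 6%N)].
Definition LG0 : seq (R * nat * nat) := [:: ((-1%:R), 4%N, 4%N); ((-1%:R), 5%N, 5%N); ((-1%:R), 6%N, 6%N); ((-1%:R), 7%N, 7%N)].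
Definition LS1 : seq (R * nat * nat) := [:: (1%:R, 4%N, 4%N); (1%:R, 5%N, 5%N); (1%:R, 6%N, 6%N); (1%:R, 7%N, 7%N)].
Definition LS2 : seq (R * nat * nat) := [:: (2%:R, 0%N, 4%N); (2%:R, 1%N, 5%N); (2%:R, 2%N, 6%N); (2%:R, 3%N, 7%N)].
Definition yent (b k : nat) (x : 'rV[R]_8) : R :=
  match b, k with
  | 0%N, 0%N => ((1%:R / 2%:R) * crd x 3)
  | 0%N, 1%N => ((-1%:R / 2%:R) * crd x 2)
  | 0%N, 2%N => ((1%:R / 2%:R) * crd x 1)
  | 0%N, 3%N => ((-1%:R / 2%:R) * crd x 0)
  | 0%N, 4%N => ((1%:R / 2%:R) * crd x 7)
  | 0%N, 5%N => ((-1%:R / 2%:R) * crd x 6)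
  | 0%N, 6%N => ((1%:R / 2%:R) * crd x 5)
  | 0%N, 7%N => ((-1%:R / 2%:R) * crd x 4)
  | 1%N, 0%N => ((1%:R / 2%:R) * crd x 2)
  | 1%N, 1%N => ((1%:R / 2%:R) * crd x 3)
  | 1%N, 2%N => ((-1%:R / 2%:R) * crd x 0)
  | 1%N, 3%N => ((-1%:R / 2%:R) * crd x 1)
  | 1%N, 4%N => ((1%:R / 2%:R) * crd x 6)
  | 1%N, 5%N => ((1%:R / 2%:R) * crd x 7)
  | 1%N, 6%N => ((-1%:R / 2%:R) * crd x 4)
  | 1%N, 7%N => ((-1%:R / 2%:R) * crd x 5)
  | 2%N, 0%N => ((1%:R / 2%:R) * crd x 1)
  | 2%N, 1%N => ((-1%:R / 2%:R) * crd x 0)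
  | 2%N, 2%N => ((-1%:R / 2%:R) * crd x 3)
  | 2%N, 3%N => ((1%:R / 2%:R) * crd x 2)
  | 2%N, 4%N => ((1%:R / 2%:R) * crd x 5)
  | 2%N, 5%N => ((-1%:R / 2%:R) * crd x 4)
  | 2%N, 6%N => ((-1%:R / 2%:R) * crd x 7)
  | 2%N, 7%N => ((1%:R / 2%:R) * crd x 6)
  | 3%N, 0%N => (1%:R * crd x 6)
  | 3%N, 1%N => (1%:R * crd x 7)
  | 3%N, 2%N => (1%:R * crd x 4)
  | 3%N, 3%N => (1%:R * crd x 5)
  | 3%N, 4%N => (0)
  | 3%N, 5%N => (0)
  | 3%N, 6%N => (0)
  | 3%N, 7%N => (0)
  | 4%N, 0%N => ((-1%:R) * crd x 7)
  | 4%N, 1%N => (1%:R * crd x 6)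
  | 4%N, 2%N => (1%:R * crd x 5)
  | 4%N, 3%N => ((-1%:R) * crd x 4)
  | 4%N, 4%N => (0)
  | 4%N, 5%N => (0)
  | 4%N, 6%N => (0)
  | 4%N, 7%N => (0)
  | 5%N, 0%N => (1%:R * crd x 4)
  | 5%N, 1%N => (1%:R * crd x 5)
  | 5%N, 2%N => ((-1%:R) * crd x 6)
  | 5%N, 3%N => ((-1%:R) * crd x 7)
  | 5%N, 4%N => (0)
  | 5%N, 5%N => (0)
  | 5%N, 6%N => (0)
  | 5%N, 7%N => (0)
  | 6%N, 0%N => ((1%:R / 2%:R) * crd x 1)
  | 6%N, 1%N => ((-1%:R / 2%:R) * crd x 0)
  | 6%N, 2%N => ((1%:R / 2%:R) * crd x 3)
  | 6%N, 3%N => ((-1%:R / 2%:R) * crd x 2)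
  | 6%N, 4%N => ((1%:R / 2%:R) * crd x 5)
  | 6%N, 5%N => ((-1%:R / 2%:R) * crd x 4)
  | 6%N, 6%N => ((1%:R / 2%:R) * crd x 7)
  | 6%N, 7%N => ((-1%:R / 2%:R) * crd x 6)
  | 7%N, 0%N => (1%:R * crd x 4)
  | 7%N, 1%N => (1%:R * crd x 5)
  | 7%N, 2%N => (1%:R * crd x 6)
  | 7%N, 3%N => (1%:R * crd x 7)
  | 7%N, 4%N => (0)
  | 7%N, 5%N => (0)
  | 7%N, 6%N => (0)
  | 7%N, 7%N => (0)
  | _, _ => 0 end.
Definition YY (b : nat) (x : 'rV[R]_8) : 'rV[R]_8 := vrow 7 (fun k => yent b k x).
Definition LPhi (b : nat) := if (b < 6)%N then LJe b else if b == 6%N then LJ0 else LG0.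

Lemma w0 : widen_ord (leqnSn 1) ord_max = ord0 :> 'I_2. Proof. exact: val_inj. Qed.
Lemma hformE (u v : 'cV[R[i]]_2) M : hform u M v =
  (u ord0 ord0)^*%C * (M ord0 ord0 * v ord0 ord0 + M ord0 ord_max * v ord_max ord0)
  + (u ord_max ord0)^*%C * (M ord_max ord0 * v ord0 ord0 + M ord_max ord_max * v ord_max ord0).
Proof. rewrite /hform /hc !(mxE, big_ord_recr, big_ord0) /= !w0; ring. Qed.
Lemma thE (x : 'rV[R]_8) : theta x ord0 ord0 = Complex (crd x 0) (crd x 1) /\
  theta x ord_max ord0 = Complex (crd x 2) (crd x 3) /\
  zeta x ord0 ord0 = Complex (crd x 4) (crd x 5) /\
  zeta x ord_max ord0 = Complex (crd x 6) (crd x 7).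
Proof. by rewrite !mxE. Qed.

Ltac hsimp x := let h1 := fresh in let h2 := fresh in let h3 := fresh in let h4 := fresh in
  have [h1 [h2 [h3 h4]]] := thE x; rewrite ?h1 ?h2 ?h3 ?h4; clear h1 h2 h3 h4.

Lemma OmegaE (u v : 'rV[R]_8) : Omega u v =
  2 * (crd u 4 * crd v 0 + crd u 5 * crd v 1 + crd u 6 * crd v 2 + crd u 7 * crd v 3)
  - 2 * (crd u 0 * crd v 4 + crd u 1 * crd v 5 + crd u 2 * crd v 6 + crd u 3 * crd v 7).
Proof.
rewrite /Omega !hformE; hsimp u; hsimp v; rewrite !mxE /=; ring.
Qed.


Lemma Je_vrow (x : 'rV[R]_8) : Je x = vrow 5 (fun k => pl (LJe k) [::] x).
Proof.
apply/rowP => i; rewrite /Je /vrow !mxE.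
case: i => [[|[|[|[|[|[|//]]]]]] Hi] /=;
 rewrite /Jup /Gup !hformE; hsimp x; rewrite /sigma /= /sigma1 /sigma2 /sigma3 !mxE /=;
 plsimp; fld.
Qed.

Lemma J0_pl : @J0 R = pl LJ0 [::].
Proof. apply/funext => x; rewrite /J0 !hformE; hsimp x; rewrite !mxE /=; plsimp; fld. Qed.
Lemma G0_pl : @G0 R = pl LG0 [::].
Proof. apply/funext => x; rewrite /G0 !hformE; hsimp x; rewrite !mxE /=; plsimp; fld. Qed.
Lemma cS1_pl : @cS1 R = pl LS1 [::].
Proof. apply/funext => x; rewrite /cS1 !hformE; hsimp x; rewrite !mxE /=; plsimp; fld. Qed.
Lemma cS2_pl : @cS2 R = pl LS2 [::].
Proof. apply/funext => x; rewrite /cS2 !hformE; hsimp x; rewrite !mxE /=; plsimp; fld. Qed.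

Lemma hamY (x v : 'rV[R]_8) b : (b < 8)%N -> Omega (YY b x) v = dpl (LPhi b) [::] x v.
Proof.
rewrite OmegaE /YY !crd_vrow //.
case: b => [|[|[|[|[|[|[|[|//]]]]]]]] _; rewrite /LPhi /=; plsimp; fld.
Qed.

Lemma crdJe (x : 'rV[R]_8) k : (k <= 5)%N -> crd (Je x) k = pl (LJe k) [::] x.
Proof. by move=> hk; rewrite Je_vrow crd_vrow. Qed.

Lemma brY (x : 'rV[R]_8) (a b : 'I_6) : dpl (LJe a) [::] x (YY b x) = Defs.piE (Je x) a b.
Proof.
rewrite /Defs.piE.
case: a => [[|[|[|[|[|[|//]]]]]] Ha]; case: b => [[|[|[|[|[|[|//]]]]]] Hb];
rewrite /= ?big_ord_recr ?big_ord0 /= ?crdJe //; plsimp; rewrite /YY ?crd_vrow // /eps /=; nsub; fld.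
Qed.

Lemma brY67 (x : 'rV[R]_8) a : (a < 6)%N ->
  dpl (LJe a) [::] x (YY 6 x) = 0 /\ dpl (LJe a) [::] x (YY 7 x) = 0.
Proof.
case: a => [|[|[|[|[|[|//]]]]]] _; plsimp; rewrite /YY ?crd_vrow //=; split; fld.
Qed.

Lemma brJ0G0 (x : 'rV[R]_8) : dpl LJ0 [::] x (YY 7 x) = 0.
Proof. plsimp; rewrite /YY ?crd_vrow //=; fld. Qed.

Lemma K1Je (x : 'rV[R]_8) : K1 (Je x) = J0 x * G0 x.
Proof.
rewrite /K1 !big_ord_recr big_ord0 /= !crdJe // J0_pl G0_pl; plsimp; fld.
Qed.

Lemma K2Je (x : 'rV[R]_8) : K2 (Je x) = G0 x ^+ 2.
Proof.
rewrite /K2 !big_ord_recr big_ord0 /= !crdJe // G0_pl; plsimp; fld.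
Qed.

Lemma S1Y (x : 'rV[R]_8) b : (b < 8)%N -> dpl LS1 [::] x (YY b x) = 0.
Proof.
case: b => [|[|[|[|[|[|[|[|//]]]]]]]] _; plsimp; rewrite /YY ?crd_vrow //=; fld.
Qed.

Lemma S2Y7 (x : 'rV[R]_8) : dpl LS2 [::] x (YY 7 x) = 2 * pl LS1 [::] x.
Proof. plsimp; rewrite /YY ?crd_vrow //=; fld. Qed.

Lemma crd_lin n (u w : 'rV[R]_n.+1) a k : crd (u - a *: w) k = crd u k - a * crd w k.
Proof. by rewrite /crd !mxE. Qed.

Lemma Omega_lin (u w v : 'rV[R]_8) a : Omega (u - a *: w) v = Omega u v - a * Omega w v.
Proof. rewrite !OmegaE !crd_lin; ring. Qed.

Lemma Omega_anti (u v : 'rV[R]_8) : Omega u v = - Omega v u.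
Proof. rewrite !OmegaE; ring. Qed.

Lemma dpl_lin n Q L (x u w : 'rV[R]_n.+1) a :
  dpl Q L x (u - a *: w) = dpl Q L x u - a * dpl Q L x w.
Proof. by rewrite -!d_pl linearB linearZ. Qed.

Lemma dJ0 (x v : 'rV[R]_8) : 'd (@J0 R) x v = dpl LJ0 [::] x v.
Proof. by rewrite J0_pl d_pl. Qed.
Lemma dG0 (x v : 'rV[R]_8) : 'd (@G0 R) x v = dpl LG0 [::] x v.
Proof. by rewrite G0_pl d_pl. Qed.

Lemma diff_pl n Q L (x : 'rV[R]_n.+1) : differentiable (pl Q L) x.
Proof. by have h := is_diff_pl Q L x; exact: ex_diff. Qed.

Lemma chainJe (H : 'rV[R]_6 -> R) (x : 'rV[R]_8) : (forall w, differentiable H w) ->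
  forall v, 'd (H \o @Je R) x v = \sum_(a < 6) dpl (LJe a) [::] x v * pd H (Je x) a.
Proof.
move=> dH v.
have [_ [_ [_ cH]]] := @chain_vrow R 7 5 (@Je R) (fun k => pl (LJe k) [::]) H x
  Je_vrow (fun k => diff_pl (LJe k) [::] x) (dH _).
by rewrite cH; apply: eq_bigr => a _; rewrite d_pl.
Qed.

Lemma smooth_diff n (H : 'rV[R]_n -> R) : smooth H -> forall w, differentiable H w.
Proof. by move=> sH; have [] := sH 1%N. Qed.
End PartA.

Section PA.
Variable R : realType.

Lemma partA (H K : 'rV[R]_6 -> R) :
  smooth H -> smooth K ->
  (forall w, LP_bracket H K w = 0) ->
  (forall x : 'rV[R]_8, @Ttilde R x ->
     let T := [set: 'rV[R]_8] in
     let om := @Omega R in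
     (poisson_commute_at T om (H \o @Je R) (K \o @Je R) x /\
      poisson_commute_at T om (H \o @Je R) (@J0 R) x /\
      poisson_commute_at T om (H \o @Je R) (@G0 R) x /\
      poisson_commute_at T om (K \o @Je R) (@J0 R) x /\
      poisson_commute_at T om (K \o @Je R) (@G0 R) x /\
      poisson_commute_at T om (@J0 R) (@G0 R) x) /\
     (K1 (Je x) = J0 x * G0 x /\ K2 (Je x) = G0 x ^+ 2)).
Proof.
move=> sH sK hLP x _ T om.
have cH := chainJe x (smooth_diff sH).
have cK := chainJe x (smooth_diff sK).
have anti : forall u v, T u -> T v -> om u v = - om v u by move=> u v _ _; exact: Omega_anti.
have gen1 : forall (F : 'rV[R]_6 -> R) (g : 'rV[R]_8 -> R) (Lg : seq (R * nat * nat)) b,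
    (forall w, differentiable F w) -> (b = 6 \/ b = 7)%N -> g = pl Lg [::] -> LPhi R b = Lg ->
    poisson_commute_at T om (F \o @Je R) g x.
  move=> F g Lg b dF hb hg hL Xf Xg _ _ hf hgg.
  rewrite (@ham_gen R 8 T om ('d (F \o @Je R) x) ('d g x) unit [:: tt] (fun _ => 1) (fun _ => dpl Lg [::] x)
     (fun _ => YY b x) Xf Xg anti) //.
  - rewrite big_cons big_nil addr0 mul1r chainJe //.
    apply: big1 => a _; have := brY67 x (ltn_ord a).
    by case=> h6 h7; case: hb => ->; rewrite ?h6 ?h7 mul0r.
  - by move=> _ v _; rewrite /om hamY ?hL //; case: hb => ->.
  - by move=> v _; rewrite big_cons big_nil addr0 mul1r hg d_pl.
have genHK : forall (F G : 'rV[R]_6 -> R),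
    (forall w, differentiable F w) -> (forall w, differentiable G w) ->
    (forall w, LP_bracket F G w = 0) ->
    poisson_commute_at T om (F \o @Je R) (G \o @Je R) x.
  move=> F G dF dG hFG Xf Xg _ _ hf hg.
  rewrite (@ham_gen R 8 T om ('d (F \o @Je R) x) ('d (G \o @Je R) x) 'I_6 (index_enum 'I_6) (fun b => pd G (Je x) b)
     (fun b => dpl (LJe R b) [::] x) (fun b => YY b x) Xf Xg anti) //.
  - apply: (@eq_trans _ _ (LP_bracket F G (Je x))); last exact: hFG.
    rewrite /LP_bracket exchange_big; apply: eq_bigr => b _.
    rewrite chainJe // mulr_sumr; apply: eq_bigr => a _.
    by rewrite brY; ring.
  - move=> b v _; rewrite /om hamY; last exact: (ltn_trans (ltn_ord b)).
    by rewrite /LPhi ltn_ord.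
  - by move=> v _; rewrite chainJe //; apply: eq_bigr => b _; rewrite mulrC.
split; last by split; [exact: K1Je | exact: K2Je].
split; first exact: genHK (smooth_diff sH) (smooth_diff sK) hLP.
split; first exact: (gen1 H _ (LJ0 R) 6%N (smooth_diff sH) (or_introl erefl) (J0_pl R) erefl).
split; first exact: (gen1 H _ (LG0 R) 7%N (smooth_diff sH) (or_intror erefl) (G0_pl R) erefl).
split; first exact: (gen1 K _ (LJ0 R) 6%N (smooth_diff sK) (or_introl erefl) (J0_pl R) erefl).
split; first exact: (gen1 K _ (LG0 R) 7%N (smooth_diff sK) (or_intror erefl) (G0_pl R) erefl).
move=> Xf Xg _ _ hf hg.
rewrite (@ham_gen R 8 T om ('d (@J0 R) x) ('d (@G0 R) x) unit [:: tt] (fun _ => 1) (fun _ => dpl (LG0 R) [::] x)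
     (fun _ => YY 7 x) Xf Xg anti) //.
- by rewrite big_cons big_nil addr0 mul1r dJ0 brJ0G0.
- by move=> _ v _; rewrite /om hamY.
- by move=> v _; rewrite big_cons big_nil addr0 mul1r dG0.
Qed.
End PA.

Section PC.
Variable R : realType.

Lemma dG0S1 (x v : 'rV[R]_8) : dpl (LG0 R) [::] x v = - dpl (LS1 R) [::] x v.
Proof. rewrite /dpl /lsum /LG0 /LS1 !big_cons !big_nil /=; ring. Qed.

Lemma partC (H K : 'rV[R]_6 -> R) :
  smooth H -> smooth K ->
  (forall w, LP_bracket H K w = 0) ->
  (forall nu : R, nu < 0 ->
     forall x : 'rV[R]_8, S_nu nu x ->
     [/\ poisson_commute_at (TS x) (@Omega R) (H \o @Je R) (K \o @Je R) x,
         poisson_commute_at (TS x) (@Omega R) (H \o @Je R) (@J0 R) x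
       & poisson_commute_at (TS x) (@Omega R) (K \o @Je R) (@J0 R) x]).
Proof.
move=> sH sK hLP nu nu0 x [_ [hn _]].
have cS1x : pl (LS1 R) [::] x = - nu.
  by rewrite -(cS1_pl R) /cS1 hn.
set D := dpl (LS2 R) [::] x (YY 7 x).
have D0 : D != 0.
  rewrite /D S2Y7 cS1x mulf_eq0 negb_or oppr_eq0 (lt_eqF nu0) andbT.
  by rewrite pnatr_eq0.
pose al b := dpl (LS2 R) [::] x (YY b x) / D.
pose Y' b := YY b x - al b *: YY 7 x.
have TSE : forall v, TS x v <-> dpl (LS1 R) [::] x v = 0 /\ dpl (LS2 R) [::] x v = 0.
  by move=> v; rewrite /TS /= (cS1_pl R) (cS2_pl R) !d_pl.
have TY : forall b, (b < 8)%N -> TS x (Y' b).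
  move=> b hb; apply/TSE; rewrite !dpl_lin S1Y // S1Y // mulr0 subr0; split => //.
  by rewrite /al -/D divfK // subrr.
have hY : forall b v, (b < 8)%N -> TS x v -> Omega (Y' b) v = dpl (LPhi R b) [::] x v.
  move=> b v hb /TSE [h1 _]; rewrite Omega_lin !hamY //.
  by rewrite /LPhi /= dG0S1 h1 oppr0 mulr0 subr0.
have dY : forall a b, (a < 6)%N -> dpl (LJe R a) [::] x (Y' b) = dpl (LJe R a) [::] x (YY b x).
  by move=> a b ha; rewrite dpl_lin (brY67 x ha).2 mulr0 subr0.
have anti : forall u v, TS x u -> TS x v -> Omega u v = - Omega v u.
  by move=> u v _ _; exact: Omega_anti.
have genHK : forall (F G : 'rV[R]_6 -> R),
    (forall w, differentiable F w) -> (forall w, differentiable G w) ->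
    (forall w, LP_bracket F G w = 0) ->
    poisson_commute_at (TS x) (@Omega R) (F \o @Je R) (G \o @Je R) x.
  move=> F G dF dG hFG Xf Xg TXf TXg hf hg.
  rewrite (@ham_gen R 8 (TS x) (@Omega R) ('d (F \o @Je R) x) ('d (G \o @Je R) x)
     'I_6 (index_enum 'I_6) (fun b => pd G (Je x) b)
     (fun b => dpl (LJe R b) [::] x) (fun b => Y' b) Xf Xg anti) //.
  - apply: (@eq_trans _ _ (LP_bracket F G (Je x))); last exact: hFG.
    rewrite /LP_bracket exchange_big; apply: eq_bigr => b _.
    rewrite chainJe // mulr_sumr; apply: eq_bigr => a _.
    by rewrite dY // brY; ring.
  - by move=> b; apply: TY; exact: (ltn_trans (ltn_ord b)).
  - move=> b v Tv; rewrite hY //; last exact: (ltn_trans (ltn_ord b)).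
    by rewrite /LPhi ltn_ord.
  - by move=> v _; rewrite chainJe //; apply: eq_bigr => b _; rewrite mulrC.
have gen1 : forall (F : 'rV[R]_6 -> R),
    (forall w, differentiable F w) ->
    poisson_commute_at (TS x) (@Omega R) (F \o @Je R) (@J0 R) x.
  move=> F dF Xf Xg TXf TXg hf hg.
  rewrite (@ham_gen R 8 (TS x) (@Omega R) ('d (F \o @Je R) x) ('d (@J0 R) x)
     unit [:: tt] (fun _ => 1) (fun _ => dpl (LJ0 R) [::] x)
     (fun _ => Y' 6%N) Xf Xg anti) //.
  - rewrite big_cons big_nil addr0 mul1r chainJe //.
    by apply: big1 => a _; rewrite dY // (brY67 x (ltn_ord a)).1 mul0r.
  - by move=> _; apply: TY.
  - by move=> _ v Tv; rewrite hY.
  - by move=> v _; rewrite big_cons big_nil addr0 mul1r dJ0.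
split.
- exact: genHK (smooth_diff sH) (smooth_diff sK) hLP.
- exact: gen1 (smooth_diff sH).
- exact: gen1 (smooth_diff sK).
Qed.
End PC.

Section PartB.
Variable R : realType.
Definition LPrq (k : nat) : seq (R * nat * nat) :=
  match k with
  | 0%N => [:: ]
  | 1%N => [:: ]
  | 2%N => [:: ]
  | 3%N => [:: (2%:R, 3%N, 5%N); (2%:R, 4%N, 6%N)]
  | 4%N => [:: ((-2%:R), 3%N, 6%N); (2%:R, 4%N, 5%N)]
  | 5%N => [:: (1%:R, 3%N, 3%N); (1%:R, 4%N, 4%N); ((-1%:R), 5%N, 5%N); ((-1%:R), 6%N, 6%N)]
  | _ => [::] end.
Definition LPrl (k : nat) : seq (R * nat) :=
  match k with
  | 0%N => [:: ((-1%:R), 1%N)]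
  | 1%N => [:: ((-1%:R), 2%N)]
  | 2%N => [:: ((-1%:R), 0%N)]
  | 3%N => [:: ]
  | 4%N => [:: ]
  | 5%N => [:: ]
  | _ => [::] end.
Definition LPhq (k : nat) : seq (R * nat * nat) :=
  match k with
  | 0%N => [:: (1%:R, 0%N, 3%N); (1%:R, 1%N, 5%N); ((-1%:R), 2%N, 6%N)]
  | 1%N => [:: (1%:R, 0%N, 4%N); (1%:R, 1%N, 6%N); (1%:R, 2%N, 5%N)]
  | 2%N => [:: ((-1%:R), 0%N, 5%N); (1%:R, 1%N, 3%N); (1%:R, 2%N, 4%N)]
  | 3%N => [:: ((-1%:R), 0%N, 6%N); (1%:R, 1%N, 4%N); ((-1%:R), 2%N, 3%N)]
  | 4%N => [:: ]
  | 5%N => [:: ]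
  | 6%N => [:: ]
  | 7%N => [:: ]
  | _ => [::] end.
Definition LPhl (k : nat) : seq (R * nat) :=
  match k with
  | 0%N => [:: ]
  | 1%N => [:: ]
  | 2%N => [:: ]
  | 3%N => [:: ]
  | 4%N => [:: (1%:R, 3%N)]
  | 5%N => [:: (1%:R, 4%N)]
  | 6%N => [:: (1%:R, 5%N)]
  | 7%N => [:: (1%:R, 6%N)]
  | _ => [::] end.
Definition LN2 : seq (R * nat * nat) := [:: (1%:R, 3%N, 3%N); (1%:R, 4%N, 4%N); (1%:R, 5%N, 5%N); (1%:R, 6%N, 6%N)].
Definition uent (b k : nat) (q : 'rV[R]_7) : R :=
  match b, k with
  | 0%N, 0%N => ((-1%:R) * crd q 2)
  | 0%N, 1%N => (0)
  | 0%N, 2%N => (1%:R * crd q 0)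
  | 0%N, 3%N => ((1%:R / 2%:R) * crd q 6)
  | 0%N, 4%N => ((-1%:R / 2%:R) * crd q 5)
  | 0%N, 5%N => ((1%:R / 2%:R) * crd q 4)
  | 0%N, 6%N => ((-1%:R / 2%:R) * crd q 3)
  | 1%N, 0%N => (1%:R * crd q 1)
  | 1%N, 1%N => ((-1%:R) * crd q 0)
  | 1%N, 2%N => (0)
  | 1%N, 3%N => ((1%:R / 2%:R) * crd q 5)
  | 1%N, 4%N => ((1%:R / 2%:R) * crd q 6)
  | 1%N, 5%N => ((-1%:R / 2%:R) * crd q 3)
  | 1%N, 6%N => ((-1%:R / 2%:R) * crd q 4)
  | 2%N, 0%N => (0)
  | 2%N, 1%N => (1%:R * crd q 2)
  | 2%N, 2%N => ((-1%:R) * crd q 1)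
  | 2%N, 3%N => ((1%:R / 2%:R) * crd q 4)
  | 2%N, 4%N => ((-1%:R / 2%:R) * crd q 3)
  | 2%N, 5%N => ((-1%:R / 2%:R) * crd q 6)
  | 2%N, 6%N => ((1%:R / 2%:R) * crd q 5)
  | 3%N, 0%N => (0)
  | 3%N, 1%N => (1%:R)
  | 3%N, 2%N => (0)
  | 3%N, 3%N => (0)
  | 3%N, 4%N => (0)
  | 3%N, 5%N => (0)
  | 3%N, 6%N => (0)
  | 4%N, 0%N => (0)
  | 4%N, 1%N => (0)
  | 4%N, 2%N => (1%:R)
  | 4%N, 3%N => (0)
  | 4%N, 4%N => (0)
  | 4%N, 5%N => (0)
  | 4%N, 6%N => (0)
  | 5%N, 0%N => (1%:R)
  | 5%N, 1%N => (0)
  | 5%N, 2%N => (0)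
  | 5%N, 3%N => (0)
  | 5%N, 4%N => (0)
  | 5%N, 5%N => (0)
  | 5%N, 6%N => (0)
  | _, _ => 0 end.
Definition rent (k : nat) (q : 'rV[R]_7) (v : 'rV[R]_6) : R :=
  match k with
  | 0%N => - crd v 2
  | 1%N => - crd v 0
  | 2%N => - crd v 1
  | 3%N => ((1%:R / 2%:R) * crd q 3 * crd v 5 + (1%:R / 2%:R) * crd q 5 * crd v 3 + (-1%:R / 2%:R) * crd q 6 * crd v 4) / pl LN2 [::] q
  | 4%N => ((1%:R / 2%:R) * crd q 4 * crd v 5 + (1%:R / 2%:R) * crd q 5 * crd v 4 + (1%:R / 2%:R) * crd q 6 * crd v 3) / pl LN2 [::] q
  | 5%N => ((1%:R / 2%:R) * crd q 3 * crd v 3 + (1%:R / 2%:R) * crd q 4 * crd v 4 + (-1%:R / 2%:R) * crd q 5 * crd v 5) / pl LN2 [::] q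
  | 6%N => ((-1%:R / 2%:R) * crd q 3 * crd v 4 + (1%:R / 2%:R) * crd q 4 * crd v 3 + (-1%:R / 2%:R) * crd q 6 * crd v 5) / pl LN2 [::] q
  | _ => 0 end.
Definition n2 (q : 'rV[R]_7) := pl LN2 [::] q.
Definition cfk (k : nat) : R := match k with 0%N => 1 | 1%N => -1 | 2%N => 1 | 3%N => -1 | _ => 0 end.
Definition mkk (k : nat) : nat := match k with 0%N => 4%N | 1%N => 3%N | 2%N => 6%N | 3%N => 5%N | _ => 0%N end.
Definition Phic (mu : R) (k : nat) (q : 'rV[R]_7) : R :=
  pl (LPhq k) (LPhl k) q + mu * cfk k * (crd q (mkk k) / n2 q).
Definition UU (b : nat) (q : 'rV[R]_7) : 'rV[R]_7 := vrow 6 (fun k => uent b k q).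
Definition Rinv (q : 'rV[R]_7) (v : 'rV[R]_6) : 'rV[R]_7 := vrow 6 (fun k => rent k q v).


Lemma inord0 : (inord 0 : 'I_2) = ord0. Proof. by apply: val_inj; rewrite /= inordK. Qed.
Lemma inord1 : (inord 1 : 'I_2) = ord_max. Proof. by apply: val_inj; rewrite /= inordK. Qed.

Lemma projE (q : 'rV[R]_7) : Defs.proj q = vrow 5 (fun k => pl (LPrq k) (LPrl k) q).
Proof.
apply/rowP => i; rewrite /Defs.proj /vrow !mxE /mxtrace.
case: i => [[|[|[|[|[|[|//]]]]]] Hi] /=;
rewrite !(mxE, big_ord_recr, big_ord0) /= ?w0; nnorm; plsimp; fld.
Qed.

Lemma n2E (q : 'rV[R]_7) : complex.Re (hform (zetaof q) 1%:M (zetaof q)) = n2 q.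
Proof. rewrite hformE !mxE /=; nnorm; rewrite /n2; plsimp; ring. Qed.

Lemma PhiE (mu : R) (q : 'rV[R]_7) : Phi mu q = vrow 7 (fun k => Phic mu k q).
Proof.
apply/rowP => i; rewrite /Phi /toR8 /vrow !mxE.
rewrite n2E.
case: i => [[|[|[|[|[|[|[|[|//]]]]]]]] Hi] /=;
try change ((0 %% 4) %/ 2)%N with 0%N; try change ((1 %% 4) %/ 2)%N with 0%N;
try change ((2 %% 4) %/ 2)%N with 1%N; try change ((3 %% 4) %/ 2)%N with 1%N;
try change ((4 %% 4) %/ 2)%N with 0%N; try change ((5 %% 4) %/ 2)%N with 0%N;
try change ((6 %% 4) %/ 2)%N with 1%N; try change ((7 %% 4) %/ 2)%N with 1%N;
rewrite ?inord0 ?inord1 !(mxE, big_ord_recr, big_ord0) /= ?w0; nnorm;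
rewrite /Phic /=; plsimp; ring.
Qed.

End PartB.

Section PartB2.
Variable R : realType.
Definition LJm (k : nat) : seq (R * nat * nat) :=
  match k with
  | 0%N => [:: ((-1%:R), 1%N, 5%N); (1%:R, 2%N, 4%N)]
  | 1%N => [:: (1%:R, 0%N, 5%N); ((-1%:R), 2%N, 3%N)]
  | 2%N => [:: ((-1%:R), 0%N, 4%N); (1%:R, 1%N, 3%N)]
  | _ => [::] end.
Definition LYS : seq (R * nat * nat) := [:: (1%:R, 3%N, 3%N); (1%:R, 4%N, 4%N); (1%:R, 5%N, 5%N)].


Definition dPhic (mu : R) (k : nat) (q v : 'rV[R]_7) : R :=
  dpl (LPhq R k) (LPhl R k) q v
  + mu * cfk R k * ((crd v (mkk k) * n2 q - crd q (mkk k) * dpl (LN2 R) [::] q v) / n2 q ^+ 2).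

Lemma is_diff_Phic mu k (q : 'rV[R]_7) : n2 q != 0 ->
  is_diff q (Phic mu k) (dPhic mu k q).
Proof.
move=> nz.
have hn : is_diff q (@n2 R) (dpl (LN2 R) [::] q) by exact: is_diff_pl.
have hV : is_diff q (fun y => (n2 y)^-1) (- (n2 q) ^- 2 \*: dpl (LN2 R) [::] q).
  apply: DiffDef; first exact: differentiableV.
  by rewrite diffV // diff_val.
have hc := is_diff_crd (mkk k) q.
have hM := is_diffM hc hV.
have hMZ := is_diffZ (mu * cfk R k) hM.
have hP := is_diff_pl (LPhq R k) (LPhl R k) q.
have hD := is_diffD hP hMZ.
have -> : Phic mu k = pl (LPhq R k) (LPhl R k) +
   (mu * cfk R k) *: ((fun y => crd y (mkk k)) * (fun y => (n2 y)^-1)).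
  by apply/funext => y.
apply: is_diff_eq hD _.
apply/funext => v; rewrite /dPhic /=.
change (dpl (LPhq R k) (LPhl R k) q v + mu * cfk R k * (crd q (mkk k) * (- (n2 q) ^- 2 * dpl (LN2 R) [::] q v) + (n2 q)^-1 * crd v (mkk k)) =
  dpl (LPhq R k) (LPhl R k) q v + mu * cfk R k * ((crd v (mkk k) * n2 q - crd q (mkk k) * dpl (LN2 R) [::] q v) / n2 q ^+ 2)).
by field.
Qed.

Lemma n2P (q : 'rV[R]_7) : n2 q = crd q 3 * crd q 3 + (crd q 4 * crd q 4 + (crd q 5 * crd q 5 + crd q 6 * crd q 6)).
Proof. rewrite /n2; plsimp; ring. Qed.

Lemma dPhi_all mu (q : 'rV[R]_7) : n2 q != 0 ->
  differentiable (Phi mu) q /\ forall v, 'd (Phi mu) q v = vrow 7 (fun k => dPhic mu k q v).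
Proof.
move=> nz.
have [dF [eF _]] := @chain_vrow R 6 7 (Phi mu) (Phic mu) (pl [::] [::]) q (PhiE mu)
  (fun k => @ex_diff _ _ _ _ _ _ _ (is_diff_Phic mu k nz)) (diff_pl _ _ _).
split => // v; rewrite eF; apply/rowP => i; rewrite /vrow !mxE.
by have h := is_diff_Phic mu i nz; rewrite diff_val.
Qed.

Lemma dproj_all (q : 'rV[R]_7) :
  differentiable (@Defs.proj R) q /\
  forall v, 'd (@Defs.proj R) q v = vrow 5 (fun k => dpl (LPrq R k) (LPrl R k) q v).
Proof.
have [dF [eF _]] := @chain_vrow R 6 5 (@Defs.proj R) (fun k => pl (LPrq R k) (LPrl R k))
   (pl [::] [::]) q (@projE R) (fun k => diff_pl _ _ _) (diff_pl _ _ _).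
split => // v; rewrite eF; apply/rowP => i; rewrite /vrow !mxE.
by rewrite d_pl.
Qed.

Lemma dPhi_U mu (q : 'rV[R]_7) b : n2 q != 0 -> (b < 6)%N ->
  'd (Phi mu) q (UU b q) = YY b (Phi mu q).
Proof.
move=> nz hb; have [_ ->] := dPhi_all mu nz.
have nz' := nz; rewrite n2P in nz'.
apply/rowP => i; rewrite /YY /vrow !mxE.
have cP : forall j, (j <= 7)%N -> crd (Phi mu q) j = Phic mu j q.
  by move=> j hj; rewrite PhiE crd_vrow.
case: i => [[|[|[|[|[|[|[|[|//]]]]]]]] Hi] /=;
case: b hb => [|[|[|[|[|[|//]]]]]] _ /=;
rewrite ?cP // /dPhic /Phic /UU; plsimp; rewrite ?crd_vrow //= n2P; field; exact: nz'.
Qed.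

Lemma dproj_Rinv (q : 'rV[R]_7) v : n2 q != 0 -> 'd (@Defs.proj R) q (Rinv q v) = v.
Proof.
move=> nz; have [_ ->] := dproj_all q.
have nz' := nz; rewrite n2P in nz'.
apply/rowP => i; rewrite /vrow !mxE.
rewrite (_ : v ord0 i = crd v i); last by rewrite /crd inord_val.
case: i => [[|[|[|[|[|[|//]]]]]] Hi] /=; rewrite /Rinv; plsimp; rewrite ?crd_vrow //=;
  plsimp; field; (exact: nz') || done.
Qed.
End PartB2.

Section PartB3.
Variable R : realType.

Definition Jmc (mu : R) (k : nat) (x : 'rV[R]_6) : R :=
  if (k < 3)%N then \sum_(l < 3) \sum_(m < 3) eps R k l m * yvec x l * pvec x m
       + mu * yvec x k / ynorm x
  else - yvec x (k - 3).

Lemma JemuE mu (x : 'rV[R]_6) : Jemu mu x = vrow 5 (fun k => Jmc mu k x).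
Proof. by apply/rowP => i; rewrite !mxE. Qed.

Definition epsn (k l m : nat) : R :=
  match k, l, m with
  | 0%N, 1%N, 2%N => 1 | 1%N, 2%N, 0%N => 1 | 2%N, 0%N, 1%N => 1
  | 0%N, 2%N, 1%N => -1 | 2%N, 1%N, 0%N => -1 | 1%N, 0%N, 2%N => -1
  | _, _, _ => 0 end.

Lemma eps_n k l m : (k < 3)%N -> (l < 3)%N -> (m < 3)%N -> eps R k l m = epsn k l m.
Proof.
case: k => [|[|[|//]]] _; case: l => [|[|[|//]]] _; case: m => [|[|[|//]]] _;
rewrite /eps /epsn /=; fld.
Qed.

Lemma JmcE mu k (x : 'rV[R]_6) : (k < 3)%N ->
  Jmc mu k x = pl (LJm R k) [::] x + mu * (crd x (3 + k) / ynorm x).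
Proof.
case: k => [|[|[|//]]] _; rewrite /Jmc /= !big_ord_recr !big_ord0 /= /yvec /pvec !eps_n //=;
nnorm; plsimp; ring.
Qed.

Lemma sq4 (a b c d : R) : a * a + (b * b + (c * c + d * d)) = 0 ->
  [/\ a = 0, b = 0, c = 0 & d = 0].
Proof.
move=> h.
have ha : a * a = 0 by nra.
have hb : b * b = 0 by nra.
have hc : c * c = 0 by nra.
have hd : d * d = 0 by nra.
by split; [move/eqP: ha | move/eqP: hb | move/eqP: hc | move/eqP: hd];
  rewrite mulf_eq0 orbb => /eqP.
Qed.

Lemma n2_ge0 (q : 'rV[R]_7) : 0 <= n2 q.
Proof. by rewrite n2P -!expr2 !addr_ge0 ?sqr_ge0. Qed.

Lemma ysq_proj (q : 'rV[R]_7) : ysq (Defs.proj q) = n2 q ^+ 2.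
Proof.
rewrite /ysq !big_ord_recr big_ord0 /= /yvec projE !crd_vrow //; nnorm; rewrite n2P; plsimp.
ring.
Qed.

Lemma ynorm_proj (q : 'rV[R]_7) : ynorm (Defs.proj q) = n2 q.
Proof. by rewrite /ynorm ysq_proj sqrtr_sqr ger0_norm // n2_ge0. Qed.


Lemma cPhi mu (q : 'rV[R]_7) j : (j <= 7)%N -> crd (Phi mu q) j = Phic mu j q.
Proof. by move=> hj; rewrite PhiE crd_vrow. Qed.
Lemma cproj (q : 'rV[R]_7) j : (j <= 5)%N -> crd (Defs.proj q) j = pl (LPrq R j) (LPrl R j) q.
Proof. by move=> hj; rewrite projE crd_vrow. Qed.

Lemma JmcPhi mu (q : 'rV[R]_7) k : (k < 6)%N ->
  Jmc mu k (Defs.proj q) = pl (LJe R k) [::] (Phi mu q).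
Proof.
have [z|nz] := eqVneq (n2 q) 0.
  move: (z); rewrite n2P => /sq4 [h3 h4 h5 h6].
  case: k => [|[|[|[|[|[|//]]]]]] _;
  rewrite /Jmc /= ?big_ord_recr ?big_ord0 /= /yvec /pvec ?eps_n //= ?ynorm_proj;
  nnorm; try change (3 + (3-3))%N with 3%N; try change (3 + (4-3))%N with 4%N;
  try change (3 + (5-3))%N with 5%N;
  rewrite ?cproj //; plsimp; rewrite ?cPhi // /Phic; plsimp;
  rewrite ?z ?h3 ?h4 ?h5 ?h6 ?invr0; ring.
case: k => [|[|[|[|[|[|//]]]]]] _;
rewrite /Jmc /= ?big_ord_recr ?big_ord0 /= /yvec /pvec ?eps_n //= ?ynorm_proj;
nnorm; try change (3 + (3-3))%N with 3%N; try change (3 + (4-3))%N with 4%N;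
try change (3 + (5-3))%N with 5%N;
rewrite ?cproj //; plsimp; rewrite ?cPhi // /Phic; plsimp;
field; exact: nz.
Qed.

Lemma ysq_pl : @ysq R = pl (LYS R) [::].
Proof. apply/funext => x; rewrite /ysq !big_ord_recr big_ord0 /= /yvec; plsimp; ring. Qed.

Lemma diff_Jmc mu k (x : 'rV[R]_6) : ysq x != 0 -> differentiable (Jmc mu k) x.
Proof.
move=> nz.
have yge : 0 <= ysq x by rewrite ysq_pl; plsimp; nra.
have ypos : 0 < ysq x by rewrite lt_def nz yge.
have yn : ynorm x != 0 by rewrite /ynorm sqrtr_eq0 -ltNge.
have dsq : differentiable (@Num.sqrt R) (ysq x).
  apply/derivable1_diffP.
  exact: (@ex_derive _ _ _ _ _ _ _ (is_derive1_sqrt ypos)).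
have dyn : differentiable (@ynorm R) x.
  have -> : @ynorm R = Num.sqrt \o (pl (LYS R) [::]) by apply/funext => y; rewrite /ynorm ysq_pl.
  apply: differentiable_comp; first exact: diff_pl.
  by rewrite -ysq_pl.
have dc : forall j, differentiable (fun y : 'rV[R]_6 => crd y j) x.
  by move=> j; have h := is_diff_crd j x; exact: ex_diff.
case: (ltnP k 3) => hk.
  have -> : Jmc mu k = pl (LJm R k) [::] +
     mu *: ((fun y => crd y (3 + k)) * (fun y => (ynorm y)^-1)).
    by apply/funext => y; rewrite JmcE.
  apply: differentiableD; first exact: diff_pl.
  apply: differentiableZ; apply: differentiableM; first exact: dc.
  exact: differentiableV.
have -> : Jmc mu k = - (fun y => crd y (3 + (k - 3))).
  by apply/funext => y; rewrite /Jmc ltnNge hk.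
exact/differentiableN/dc.
Qed.
End PartB3.

Section PartB4.
Variable R : realType.

Lemma row_crd n (u w : 'rV[R]_n.+1) : (forall k, (k <= n)%N -> crd u k = crd w k) -> u = w.
Proof.
move=> h; apply/rowP => i; have := h i; rewrite /crd inord_val; apply.
by rewrite -ltnS ltn_ord.
Qed.

Definition qof (a b c d : R) (x : 'rV[R]_6) : 'rV[R]_7 :=
  vrow 6 (fun k => match k with 0%N => - crd x 2 | 1%N => - crd x 0 | 2%N => - crd x 1
                    | 3%N => a | 4%N => b | 5%N => c | 6%N => d | _ => 0 end).

Lemma proj_qof a b c d (x : 'rV[R]_6) :
  2 * (a * c + b * d) = crd x 3 -> 2 * (b * c - a * d) = crd x 4 ->
  a * a + b * b - c * c - d * d = crd x 5 -> Defs.proj (qof a b c d x) = x.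
Proof.
move=> e3 e4 e5; apply: row_crd => k hk; rewrite cproj //.
case: k hk => [|[|[|[|[|[|//]]]]]] _; plsimp; rewrite /qof ?crd_vrow //=.
- ring.
- ring.
- ring.
- by rewrite -e3; ring.
- by rewrite -e4; ring.
- by rewrite -e5; ring.
Qed.


Lemma exists_q (x : 'rV[R]_6) : ysq x != 0 ->
  exists q : 'rV[R]_7, Defs.proj q = x /\ n2 q != 0.
Proof.
move=> nz.
suff [q hq] : exists q : 'rV[R]_7, Defs.proj q = x.
  exists q; split => //; apply: contra nz => /eqP z.
  by rewrite -hq ysq_proj z expr0n.
have yE : ysq x = crd x 3 * crd x 3 + crd x 4 * crd x 4 + crd x 5 * crd x 5.
  by rewrite ysq_pl; plsimp; ring.
set y1 := crd x 3 in yE *; set y2 := crd x 4 in yE *; set y3 := crd x 5 in yE *.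
have yge : 0 <= ysq x by rewrite yE; nra.
set r := ynorm x.
have r0 : 0 <= r by exact: sqrtr_ge0.
have r2 : r * r = y1 * y1 + y2 * y2 + y3 * y3 by rewrite -yE -expr2 /r /ynorm sqr_sqrtr.
have [pos|npos] := ltP 0 (r + y3).
  set A := (r + y3) / 2.
  have A0 : 0 < A by rewrite divr_gt0.
  set a := Num.sqrt A.
  have a2 : a * a = A by rewrite -expr2 /a sqr_sqrtr // ltW.
  have a0 : a != 0 by rewrite sqrtr_eq0 -ltNge.
  exists (qof a 0 (y1 / (2 * a)) (- y2 / (2 * a)) x); apply: proj_qof.
  - by rewrite -/y1; field.
  - by rewrite -/y2; field.
  rewrite -/y3.
  have e1 : y1 / (2 * a) * (y1 / (2 * a)) + - y2 / (2 * a) * (- y2 / (2 * a))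
      = (y1 * y1 + y2 * y2) / (4 * (a * a)) by field.
  have rne : r + y3 != 0 by rewrite gt_eqF.
  have e2 : y1 * y1 + y2 * y2 = (r + y3) * (r - y3) by rewrite mulrDl !mulrDr r2; ring.
  have : a * a + 0 * 0 - y1 / (2 * a) * (y1 / (2 * a)) - - y2 / (2 * a) * (- y2 / (2 * a))
     = a * a - (y1 / (2 * a) * (y1 / (2 * a)) + - y2 / (2 * a) * (- y2 / (2 * a))) by ring.
  move=> ->; rewrite e1 e2 a2 /A; field.
  by rewrite rne.
have ry : r + y3 = 0.
  apply/eqP; rewrite eq_le npos /=; nra.
have y12 : y1 * y1 + y2 * y2 = 0 by nra.
have h1 : y1 * y1 = 0 by nra.
have h2 : y2 * y2 = 0 by nra.
have z1 : y1 = 0 by move/eqP: h1; rewrite mulf_eq0 orbb => /eqP.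
have z2 : y2 = 0 by move/eqP: h2; rewrite mulf_eq0 orbb => /eqP.
exists (qof 0 0 0 (Num.sqrt r) x); apply: proj_qof.
- by rewrite -/y1 z1; ring.
- by rewrite -/y2 z2; ring.
rewrite -/y3 (_ : Num.sqrt r * Num.sqrt r = r); last by rewrite -expr2 sqr_sqrtr.
have -> : y3 = - r by apply/eqP; rewrite -subr_eq0 opprK addrC ry.
ring.
Qed.
End PartB4.

Section PartB5.
Variable R : realType.

Lemma K2_pl : @K2 R = pl (LYS R) [::].
Proof. apply/funext => w; rewrite /K2 !big_ord_recr big_ord0 /=; plsimp; nnorm; ring. Qed.

Lemma crd_delta (b : 'I_6) j : (j <= 5)%N -> crd (delta_mx ord0 b : 'rV[R]_6) j = (j == b)%:R.
Proof.
move=> hj; rewrite /crd mxE eqxx /=; congr ((_ : bool)%:R).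
by rewrite -(inj_eq val_inj) /= inordK.
Qed.

Lemma casK2 (w : 'rV[R]_6) (a : 'I_6) : \sum_(b < 6) Defs.piE w a b * pd (@K2 R) w b = 0.
Proof.
rewrite /pd K2_pl.
case: a => [[|[|[|[|[|[|//]]]]]] Ha]; rewrite !big_ord_recr big_ord0 /= !d_pl;
plsimp; rewrite !crd_delta //= /Defs.piE /= ?big_ord_recr ?big_ord0 /=; nsub;
rewrite ?eps_n //=; nnorm; ring.
Qed.

Lemma LP_K2 (F : 'rV[R]_6 -> R) w : LP_bracket F (@K2 R) w = 0.
Proof.
rewrite /LP_bracket; apply: big1 => a _.
rewrite (eq_bigr (fun b => pd F w a * (Defs.piE w a b * pd (@K2 R) w b))).
  by rewrite -mulr_sumr casK2 mulr0.
by move=> b _; ring.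
Qed.


Lemma K2Jemu mu (x : 'rV[R]_6) : K2 (Jemu mu x) = ysq x.
Proof.
rewrite /K2 /ysq; apply: eq_bigr => k _.
have hk : (3 + k <= 5)%N by case: k => [[|[|[|//]]]].
rewrite JemuE crd_vrow // /Jmc ltnNge leq_addr /= addKn sqrrN.
by [].
Qed.

Lemma JemuPhi mu (q : 'rV[R]_7) : Jemu mu (Defs.proj q) = Je (Phi mu q).
Proof.
rewrite JemuE Je_vrow; apply/rowP => i; rewrite /vrow !mxE JmcPhi //.
Qed.

Lemma partB (H K : 'rV[R]_6 -> R) :
  smooth H -> smooth K ->
  (forall w, LP_bracket H K w = 0) ->
  (forall (mu : R) (om : 'rV[R]_6 -> 'rV[R]_6 -> 'rV[R]_6 -> R),
     is_Omega_mu mu om ->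
     forall x : 'rV[R]_6, @Rdot3 R x ->
     let T := [set: 'rV[R]_6] in
     [/\ K2 (Jemu mu x) = ysq x,
         poisson_commute_at T (om x) (H \o Jemu mu) (K \o Jemu mu) x,
         poisson_commute_at T (om x) (H \o Jemu mu) (@K2 R \o Jemu mu) x
       & poisson_commute_at T (om x) (K \o Jemu mu) (@K2 R \o Jemu mu) x]).
Proof.
move=> sH sK hLP mu om hom x hx T.
have hx' : ysq x != 0 by [].
have [q [hq nz]] := exists_q hx'.
have zq : zetaof q != 0.
  apply: contra nz => /eqP z.
  have : zetaof q ord0 ord0 = 0 /\ zetaof q ord_max ord0 = 0 by rewrite z !mxE.
  rewrite !mxE /= => -[[h3 h4] [h5 h6]].
  by rewrite n2P h3 h4 h5 h6 !mul0r !addr0.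
subst x.
have [dPr ePr] := dproj_all q.
have [dPh ePh] := dPhi_all mu nz.
have key : forall a w, (a < 6)%N ->
   'd (Jmc mu a) (Defs.proj q) ('d (@Defs.proj R) q w) =
   dpl (LJe R a) [::] (Phi mu q) ('d (Phi mu) q w).
  move=> a w ha.
  have dJ := diff_Jmc mu a hx'.
  have e1 := diff_comp dPr dJ.
  have -> : 'd (Jmc mu a) (Defs.proj q) ('d (@Defs.proj R) q w) =
     'd (Jmc mu a \o @Defs.proj R) q w by rewrite e1.
  have -> : Jmc mu a \o @Defs.proj R = pl (LJe R a) [::] \o Phi mu.
    by apply/funext => y /=; rewrite JmcPhi.
  have e2 := diff_comp dPh (diff_pl (LJe R a) [::] (Phi mu q)).
  by rewrite e2 /= d_pl.
have chainJm : forall F : 'rV[R]_6 -> R, (forall w, differentiable F w) ->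
   forall v, 'd (F \o Jemu mu) (Defs.proj q) v =
     \sum_(a < 6) 'd (Jmc mu a) (Defs.proj q) v * pd F (Je (Phi mu q)) a.
  move=> F dF v.
  have [_ [_ [_ cF]]] := @chain_vrow R 5 5 (Jemu mu) (Jmc mu) F (Defs.proj q) (JemuE mu)
    (fun k => diff_Jmc mu k hx') (dF _).
  by rewrite cF JemuPhi.
set om' := om (Defs.proj q).
have omE : forall u v, om' ('d (@Defs.proj R) q u) ('d (@Defs.proj R) q v) =
    Omega ('d (Phi mu) q u) ('d (Phi mu) q v) by move=> u v; exact: hom.
have anti : forall u v, T u -> T v -> om' u v = - om' v u.
  move=> u v _ _.
  rewrite -[u](dproj_Rinv u nz) -[v](dproj_Rinv v nz) !omE; exact: Omega_anti.
have genHK : forall (F G : 'rV[R]_6 -> R),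
    (forall w, differentiable F w) -> (forall w, differentiable G w) ->
    (forall w, LP_bracket F G w = 0) ->
    poisson_commute_at T om' (F \o Jemu mu) (G \o Jemu mu) (Defs.proj q).
  move=> F G dF dG hFG Xf Xg TXf TXg hf hg.
  rewrite (@ham_gen R 6 T om' ('d (F \o Jemu mu) (Defs.proj q)) ('d (G \o Jemu mu) (Defs.proj q))
     'I_6 (index_enum 'I_6) (fun b => pd G (Je (Phi mu q)) b)
     (fun b => 'd (Jmc mu b) (Defs.proj q)) (fun b => 'd (@Defs.proj R) q (UU b q)) Xf Xg anti) //.
  - apply: (@eq_trans _ _ (LP_bracket F G (Je (Phi mu q)))); last exact: hFG.
    rewrite /LP_bracket exchange_big; apply: eq_bigr => b _.
    rewrite chainJm // mulr_sumr; apply: eq_bigr => a _.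
    by rewrite key // dPhi_U // brY; ring.
  - move=> b v _.
    rewrite -[v in LHS](dproj_Rinv v nz) omE dPhi_U // hamY; last first.
      exact: (ltn_trans (ltn_ord b)).
    by rewrite /LPhi ltn_ord -key // dproj_Rinv.
  - by move=> v _; rewrite chainJm //; apply: eq_bigr => b _; rewrite mulrC.
have dK2 : forall w, differentiable (@K2 R) w by move=> w; rewrite K2_pl; exact: diff_pl.
split.
- exact: K2Jemu.
- exact: genHK (smooth_diff sH) (smooth_diff sK) hLP.
- exact: genHK (smooth_diff sH) dK2 (LP_K2 H).
- exact: genHK (smooth_diff sK) dK2 (LP_K2 K).
Qed.
End PartB5.

Unset Implicit Arguments.

Theorem mainTheorem13 (R : realType) (H K : 'rV[R]_6 -> R) :
  smooth H -> smooth K ->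
  (forall w, LP_bracket H K w = 0) ->
  (* (a) *)
  (forall x : 'rV[R]_8, @Ttilde R x ->
     let T := [set: 'rV[R]_8] in
     let om := @Omega R in
     (poisson_commute_at T om (H \o @Je R) (K \o @Je R) x /\
      poisson_commute_at T om (H \o @Je R) (@J0 R) x /\
      poisson_commute_at T om (H \o @Je R) (@G0 R) x /\
      poisson_commute_at T om (K \o @Je R) (@J0 R) x /\
      poisson_commute_at T om (K \o @Je R) (@G0 R) x /\
      poisson_commute_at T om (@J0 R) (@G0 R) x) /\
     (K1 (Je x) = J0 x * G0 x /\ K2 (Je x) = G0 x ^+ 2)) /\
  (* (b) *)
  (forall (mu : R) (om : 'rV[R]_6 -> 'rV[R]_6 -> 'rV[R]_6 -> R),
     is_Omega_mu mu om ->
     forall x : 'rV[R]_6, @Rdot3 R x ->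
     let T := [set: 'rV[R]_6] in
     [/\ K2 (Jemu mu x) = ysq x,
         poisson_commute_at T (om x) (H \o Jemu mu) (K \o Jemu mu) x,
         poisson_commute_at T (om x) (H \o Jemu mu) (@K2 R \o Jemu mu) x
       & poisson_commute_at T (om x) (K \o Jemu mu) (@K2 R \o Jemu mu) x]) /\
  (* (c) *)
  (forall nu : R, nu < 0 ->
     forall x : 'rV[R]_8, S_nu nu x ->
     [/\ poisson_commute_at (TS x) (@Omega R) (H \o @Je R) (K \o @Je R) x,
         poisson_commute_at (TS x) (@Omega R) (H \o @Je R) (@J0 R) x
       & poisson_commute_at (TS x) (@Omega R) (K \o @Je R) (@J0 R) x]).
Proof.
move=> sH sK hLP; split; first exact: partA sH sK hLP.
split; first exact: partB sH sK hLP.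
exact: partC sH sK hLP.
Qed.
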